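(* Let $C$ be a finite set of constraints over propositional variables $x\in\{\pm1\}^n$ and real variables $y\in\mathbb{R}^m$, let $F=\bigwedge_{c\in C}c$, and let $w_c>0$ be a weight for each $c\in C$. Let $\mathcal{F}_w(a,b)=\sum_{c\in C}w_c\, f_c(a,b)$ for $(a,b)\in[-1,1]^n\times\mathbb{R}^m$, where $f_c(a,b)$ is the multilinear extension (in the propositional variables) of the extended Walsh–Fourier expansion of $c$, as defined in the context. Then $F$ is satisfiable if and only if $$\min_{a\in[-1,1]^n,\ b\in\mathbb{R}^m}\mathcal{F}_w(a,b)=-\sum_{c\in C}w_c .$$
   Context: Truth values are encoded as $-1$ = True and $+1$ = False. There are $k$ atoms $\alpha_1,\dots,\alpha_k$; each atom is a linear (in)equality $\alpha_i:\ \sum_{j=1}^m q_{i,j}y_j-q_{i,0}\bowtie_i 0$ with $\bowtie_i\in\{=,<,\le,>,\ge\}$ and real coefficients $q_{i,j}$. Its indicator is $\delta_i(y)=-1$ if $\alpha_i$ holds at $y$ and $\delta_i(y)=1$ otherwise; write $\delta(y)=(\delta_1(y),\dots,\delta_k(y))$. Each constraint $c\in C$ is a Boolean combination of the propositional variables and atoms, represented as $f_c:\{\pm1\}^n\times\mathbb{R}^m\to\{\pm1\}$ with $f_c(x,y)=-1$ iff $c$ is true at $(x,y)$; thus $f_c(x,y)=\tilde f_c(x,\delta(y))$ for a Boolean function $\tilde f_c:\{\pm1\}^{n+k}\to\{\pm1\}$. For $S\subseteq[n]$, $T\subseteq[k]$ put $\hat f_c(S,T)=\mathbb{E}_{(x,z)\sim\{\pm1\}^{n+k}\text{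 uniform}}\big[\tilde f_c(x,z)\prod_{i\in S}x_i\prod_{i\in T}z_i\big]$, so that $f_c(x,y)=\sum_{S\subseteq[n],T\subseteq[k]}\hat f_c(S,T)\prod_{i\in S}x_i\prod_{i\in T}\delta_i(y)$ (the extended Walsh–Fourier expansion). This formula is used to define $f_c(a,b)$ for all $a\in[-1,1]^n$, $b\in\mathbb{R}^m$ by replacing $x_i$ with $a_i$ and $y$ with $b$. $F$ is satisfiable iff there exist $x\in\{\pm1\}^n$, $y\in\mathbb{R}^m$ with $f_c(x,y)=-1$ for all $c\in C$. *)

(* Defs.v *)
From HB Require Import structures.
From mathcomp Require Import all_boot all_order all_algebra.
Set Implicit Arguments. Unset Strict Implicit. Unset Printing Implicit Defensive.
Import Order.TTheory GRing.Theory Num.Theory.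
Local Open Scope ring_scope.

Inductive relop := REq | RLt | RLe | RGt | RGe.

Definition rel_holds (R : realDomainType) (o : relop) (v : R) : bool :=
  match o with
  | REq => v == 0 | RLt => v < 0 | RLe => v <= 0 | RGt => 0 < v | RGe => 0 <= v
  end.

(* Encoding of truth values: -1 = True, +1 = False. *)
Definition pm (R : realDomainType) (b : bool) : R := if b then -1 else 1.

Definition atom_holds (R : realDomainType) (m k : nat)
  (q : 'I_k -> 'I_m -> R) (q0 : 'I_k -> R) (rel : 'I_k -> relop)
  (i : 'I_k) (y : 'I_m -> R) : bool :=
  rel_holds (rel i) (\sum_(j < m) q i j * y j - q0 i).

Definition delta (R : realDomainType) (m k : nat)
  (q : 'I_k -> 'I_m -> R) (q0 : 'I_k -> R) (rel : 'I_k -> relop)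
  (i : 'I_k) (y : 'I_m -> R) : R :=
  pm R (atom_holds q q0 rel i y).

(* A Boolean function {±1}^{n+k} -> {±1} is given by tf : {ffun 'I_n -> bool} ->
   {ffun 'I_k -> bool} -> bool, where a bit 'true' stands for the value -1 (True)
   and the output 'true' means the value -1 (constraint true). *)
Definition tfR (R : realDomainType) (n k : nat)
  (tf : {ffun 'I_n -> bool} -> {ffun 'I_k -> bool} -> bool)
  (x : {ffun 'I_n -> bool}) (z : {ffun 'I_k -> bool}) : R := pm R (tf x z).

Definition fourier_coef (R : realFieldType) (n k : nat)
  (tf : {ffun 'I_n -> bool} -> {ffun 'I_k -> bool} -> bool)
  (S : {set 'I_n}) (T : {set 'I_k}) : R :=
  (2 ^+ (n + k))^-1 *
  \sum_(x : {ffun 'I_n -> bool}) \sum_(z : {ffun 'I_k -> bool})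
     tfR R tf x z * (\prod_(i in S) pm R (x i)) * (\prod_(i in T) pm R (z i)).

Definition fc (R : realFieldType) (n m k : nat)
  (q : 'I_k -> 'I_m -> R) (q0 : 'I_k -> R) (rel : 'I_k -> relop)
  (tf : {ffun 'I_n -> bool} -> {ffun 'I_k -> bool} -> bool)
  (a : 'I_n -> R) (b : 'I_m -> R) : R :=
  \sum_(S : {set 'I_n}) \sum_(T : {set 'I_k})
    fourier_coef R tf S T * (\prod_(i in S) a i)
      * (\prod_(i in T) delta q q0 rel i b).

Definition constraint_true (R : realDomainType) (n m k : nat)
  (q : 'I_k -> 'I_m -> R) (q0 : 'I_k -> R) (rel : 'I_k -> relop)
  (tf : {ffun 'I_n -> bool} -> {ffun 'I_k -> bool} -> bool)
  (x : {ffun 'I_n -> bool}) (y : 'I_m -> R) : bool :=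
  tf x [ffun i => atom_holds q q0 rel i y].

Definition satisfiable (R : realDomainType) (n m k : nat) (C : finType)
  (q : 'I_k -> 'I_m -> R) (q0 : 'I_k -> R) (rel : 'I_k -> relop)
  (tf : C -> {ffun 'I_n -> bool} -> {ffun 'I_k -> bool} -> bool) : Prop :=
  exists (x : {ffun 'I_n -> bool}) (y : 'I_m -> R),
    forall c : C, pm R (constraint_true q q0 rel (tf c) x y) = -1.

Definition Fw (R : realFieldType) (n m k : nat) (C : finType)
  (q : 'I_k -> 'I_m -> R) (q0 : 'I_k -> R) (rel : 'I_k -> relop)
  (tf : C -> {ffun 'I_n -> bool} -> {ffun 'I_k -> bool} -> bool)
  (w : C -> R) (a : 'I_n -> R) (b : 'I_m -> R) : R :=
  \sum_(c : C) w c * fc q q0 rel (tf c) a b.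

Definition in_cube (R : realDomainType) (n : nat) (a : 'I_n -> R) : Prop :=
  forall i, -1 <= a i <= 1.

(* Main.v *)
Require Import Defs.
From HB Require Import structures.
From mathcomp Require Import all_boot all_order all_algebra.
From mathcomp Require Import reals.
From mathcomp Require Import ring lra.
Import Order.TTheory GRing.Theory Num.Theory.
Local Open Scope ring_scope.
Set Implicit Arguments. Unset Strict Implicit.

Section S.
Variable R : realFieldType.

Lemma prod_subsets (I : finType) (u : I -> R) :
  \sum_(S : {set I}) \prod_(i in S) u i = \prod_i (u i + 1).
Proof.
rewrite (@bigA_distr R 0 1 *%R +%R _ u (fun=> 1)) /=.
apply: eq_big => // S _; rewrite [LHS]big_mkcond /=.
by apply: eq_bigr => i _; case: (i \in S).
Qed.

Lemma pm_sq b : pm R b * pm R b = 1.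
Proof. by case: b; rewrite /pm ?mulrNN mulr1. Qed.

Lemma pm_ge b : 0 <= pm R b + 1.
Proof. by case: b; rewrite /pm; lra. Qed.

Lemma pm_cube (n : nat) (x : {ffun 'I_n -> bool}) : in_cube (fun i => pm R (x i)).
Proof. by move=> i; case: (x i); rewrite /pm; apply/andP; split; lra. Qed.

Definition pw n (a : 'I_n -> R) (x : {ffun 'I_n -> bool}) : R :=
  \prod_i ((1 + pm R (x i) * a i) / 2).

Lemma pw_ge0 n (a : 'I_n -> R) x : in_cube a -> 0 <= pw a x.
Proof.
move=> ha; apply: prodr_ge0 => i _; have /andP[h1 h2] := ha i.
by case: (x i); rewrite /pm; lra.
Qed.

Lemma pw_sum1 n (a : 'I_n -> R) : \sum_x pw a x = 1.
Proof.
rewrite /pw -(@bigA_distr_bigA R 0 1 *%R +%R _ _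
  (fun i b => (1 + pm R b * a i) / 2)) /=.
by apply: big1 => i _; rewrite big_bool /pm /=; field.
Qed.

Lemma pw_pm n (x x' : {ffun 'I_n -> bool}) :
  pw (fun i => pm R (x i)) x' = (x' == x)%:R.
Proof.
rewrite /pw; have [->|ne] := eqVneq x' x.
  by apply: big1 => i _; rewrite pm_sq; field.
have [i hi] : exists i, x' i != x i.
  apply/existsP; apply: contraR ne => /existsPn h; apply/eqP/ffunP => i.
  by have := h i; rewrite negbK => /eqP.
rewrite (bigD1 i) //= .
suff -> : 1 + pm R (x' i) * pm R (x i) = 0 by rewrite mul0r mul0r.
by move: hi; case: (x' i); case: (x i) => //= _; rewrite /pm; lra.
Qed.

End S.

Section S.
Variable R : realFieldType.

Lemma hz k (z z0 : {ffun 'I_k -> bool}) :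
  \sum_(T : {set 'I_k}) \prod_(i in T) (pm R (z i) * pm R (z0 i)) = (z == z0)%:R * 2 ^+ k.
Proof.
rewrite prod_subsets; have [->|ne] := eqVneq z z0.
  rewrite mul1r -[in RHS](card_ord k) -prodr_const; apply: eq_bigr => i _.
  by rewrite pm_sq.
have [i hi] : exists i, z i != z0 i.
  apply/existsP; apply: contraR ne => /existsPn h; apply/eqP/ffunP => i.
  by have := h i; rewrite negbK => /eqP.
rewrite mul0r (bigD1 i) //=.
suff -> : pm R (z i) * pm R (z0 i) + 1 = 0 by rewrite mul0r.
by move: hi; case: (z i); case: (z0 i) => //= _; rewrite /pm; lra.
Qed.

Lemma hx n (a : 'I_n -> R) (x : {ffun 'I_n -> bool}) :
  \sum_(S : {set 'I_n}) \prod_(i in S) (pm R (x i) * a i) = 2 ^+ n * pw a x.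
Proof.
rewrite prod_subsets /pw.
under [in RHS]eq_bigr do rewrite mulrC.
rewrite big_split /= prodr_const card_ord mulrA -exprMn mulfV ?expr1n ?mul1r.
  by apply: eq_bigr => i _; rewrite addrC.
by rewrite pnatr_eq0.
Qed.

End S.

Section S.
Variable R : realFieldType.

Lemma fc_expand n m k (q : 'I_k -> 'I_m -> R) q0 rel tf (a : 'I_n -> R) b :
  fc q q0 rel tf a b =
  \sum_x pw a x * pm R (tf x [ffun i => atom_holds q q0 rel i b]).
Proof.
set z0 := [ffun i => atom_holds q q0 rel i b].
have hd i : delta q q0 rel i b = pm R (z0 i) by rewrite /delta /z0 ffunE.
rewrite /fc /fourier_coef.
transitivity (\sum_(S : {set 'I_n}) \sum_(T : {set 'I_k}) \sum_x \sum_z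
   ((2 ^+ (n + k))^-1 * tfR R tf x z * (\prod_(i in S) (pm R (x i) * a i))
      * (\prod_(i in T) (pm R (z i) * pm R (z0 i))))).
  apply: eq_bigr => S _; apply: eq_bigr => T _.
  rewrite mulr_sumr !mulr_suml; apply: eq_bigr => x _.
  rewrite mulr_sumr !mulr_suml; apply: eq_bigr => z _.
  rewrite !big_split /=; idtac.
  have -> : \prod_(i in T) delta q q0 rel i b = \prod_(i in T) pm R (z0 i) by apply: eq_bigr => i _; exact: hd.
  ring.
under eq_bigr => S _ do rewrite exchange_big.
rewrite exchange_big; apply: eq_bigr => x _.
under eq_bigr => S _ do rewrite exchange_big.
rewrite exchange_big /=.
under eq_bigr => z _.
  under eq_bigr => S _ do rewrite -mulr_sumr.
  rewrite -mulr_suml -mulr_sumr hx hz.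
  over.
rewrite (bigD1 z0) //= big1 ?addr0; last first.
  by move=> z /negbTE ->; rewrite mul0r !mulr0.
rewrite eqxx /tfR exprD invfM /= mul1r.
have hN : (2 ^+ n : R) != 0 by rewrite expf_eq0 pnatr_eq0 andbF.
have hK : (2 ^+ k : R) != 0 by rewrite expf_eq0 pnatr_eq0 andbF.
field; apply/andP; split=> //.
Qed.
End S.

Section S.
Variable R : realFieldType.

Lemma fc_plus1 n m k (q : 'I_k -> 'I_m -> R) q0 rel tf (a : 'I_n -> R) b :
  fc q q0 rel tf a b + 1 =
  \sum_x pw a x * (pm R (tf x [ffun i => atom_holds q q0 rel i b]) + 1).
Proof.
rewrite fc_expand -[X in _ + X](pw_sum1 a) -big_split /=.
by apply: eq_bigr => x _; rewrite mulrDr mulr1.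
Qed.

Lemma fc_ge n m k (q : 'I_k -> 'I_m -> R) q0 rel tf (a : 'I_n -> R) b :
  in_cube a -> -1 <= fc q q0 rel tf a b.
Proof.
move=> ha; rewrite -subr_ge0 opprK fc_plus1; apply: sumr_ge0 => x _.
by apply: mulr_ge0; [exact: pw_ge0 | exact: pm_ge].
Qed.

Lemma fc_pm n m k (q : 'I_k -> 'I_m -> R) q0 rel tf (x : {ffun 'I_n -> bool}) b :
  fc q q0 rel tf (fun i => pm R (x i)) b =
  pm R (tf x [ffun i => atom_holds q q0 rel i b]).
Proof.
rewrite fc_expand (bigD1 x) //= big1 ?addr0.
  by rewrite pw_pm eqxx mul1r.
by move=> x' /negbTE hx; rewrite pw_pm hx mul0r.
Qed.

End S.

Theorem theorem1 (R : realType) (n m k : nat) (C : finType)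
  (q : 'I_k -> 'I_m -> R) (q0 : 'I_k -> R) (rel : 'I_k -> relop)
  (tf : C -> {ffun 'I_n -> bool} -> {ffun 'I_k -> bool} -> bool)
  (w : C -> R) (hw : forall c, 0 < w c) :
  satisfiable q q0 rel tf <->
  ((exists (a : 'I_n -> R) (b : 'I_m -> R),
       in_cube a /\ Fw q q0 rel tf w a b = - \sum_(c : C) w c) /\
   (forall (a : 'I_n -> R) (b : 'I_m -> R),
       in_cube a -> - \sum_(c : C) w c <= Fw q q0 rel tf w a b)).
Proof.
have lb (a : 'I_n -> R) (b : 'I_m -> R) :
    in_cube a -> - \sum_(c : C) w c <= Fw q q0 rel tf w a b.
  move=> ha; rewrite /Fw -sumrN; apply: ler_sum => c _.
  by rewrite -mulrN1 ler_pM2l ?hw ?fc_ge.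
split.
  move=> [x [y H]]; split=> //.
  exists (fun i => pm R (x i)), y; split; first exact: pm_cube.
  rewrite /Fw -sumrN; apply: eq_bigr => c _.
  by rewrite fc_pm; have := H c; rewrite /constraint_true => ->; rewrite mulrN1.
move=> [[a [b [ha hF]]] _].
exists [ffun i => a i <= 0], b => c.
have h1 : \sum_(c : C) w c * (fc q q0 rel (tf c) a b + 1) = 0.
  rewrite (eq_bigr (fun c => w c * fc q q0 rel (tf c) a b + w c)); last first.
    by move=> c' _; rewrite mulrDr mulr1.
  by rewrite big_split /= -/(Fw q q0 rel tf w a b) hF addNr.
have h2 : w c * (fc q q0 rel (tf c) a b + 1) = 0.
  apply: (psumr_eq0P _ h1) => // c' _; apply: mulr_ge0; first exact: ltW.
  by have := fc_ge q q0 rel (tf c') b ha; lra.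
move: h2 => /eqP; rewrite mulf_eq0 gt_eqF ?hw //= fc_plus1 => /eqP h2.
have h3 : pw a [ffun i => a i <= 0] *
   (pm R (tf c [ffun i => a i <= 0] [ffun i => atom_holds q q0 rel i b]) + 1) = 0.
  apply: (psumr_eq0P _ h2) => // x _; apply: mulr_ge0; [exact: pw_ge0 | exact: pm_ge].
have hp : 0 < pw a [ffun i => a i <= 0].
  apply: prodr_gt0 => i _; rewrite ffunE /pm.
  have /andP[h5 h6] := ha i.
  by case: (lerP (a i) 0) => h; lra.
move: h3 => /eqP; rewrite mulf_eq0 gt_eqF //= => /eqP h3.
rewrite /constraint_true; lra.
Qed.
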